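(* Let $\Box$ be the full subcategory of $\mathbf{Poset}$ on the posets $[1]^n$ for $n \geq 0$, and let $\mathbf{Poset}_{\mathsf{compl},\mathsf{fin}}$ be the full subcategory of $\mathbf{Poset}$ on the finite posets that are complete. Then the inclusion $\Box \to \mathbf{Poset}_{\mathsf{compl},\mathsf{fin}}$ is an idempotent completion. That is: it is fully faithful, every idempotent in $\mathbf{Poset}_{\mathsf{compl},\mathsf{fin}}$ splits in $\mathbf{Poset}_{\mathsf{compl},\mathsf{fin}}$, and every finite complete poset is a retract, in $\mathbf{Poset}$, of $[1]^n$ for some $n \geq 0$.
   Context: $\mathbf{Poset}$ is the category of small posets and monotone maps; a poset is regarded as a category with at most one morphism $x \to y$, present exactly when $x \leq y$. $[1]$ is the poset $\{0 < 1\}$ and $[1]^n$ is its $n$-fold product (componentwise order). A poset is complete if every diagram in it has a limit; equivalently, every subset has a greatest lower bound. An idempotent $f\colon A \to A$ ($f^2=f$) splits if there are $r\colon A\to B$ and $s\colon B\to A$ with $rs=\mathrm{id}_B$ and $sr=f$. In that situation $B$ is called a retract of $A$. *)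

(* Defs.v *)
From mathcomp Require Import all_boot.
Set Implicit Arguments. Unset Strict Implicit. Unset Printing Implicit Defensive.

Record finPoset := FinPoset {
  carrier :> finType;
  ple : rel carrier;
  ple_refl : reflexive ple;
  ple_anti : antisymmetric ple;
  ple_trans : transitive ple }.

Definition monotone (A B : finPoset) (f : A -> B) : Prop :=
  forall x y : A, ple x y -> ple (f x) (f y).

Definition is_glb (A : finPoset) (S : {set A}) (m : A) : Prop :=
  (forall x, x \in S -> ple m x) /\
  (forall y : A, (forall x, x \in S -> ple y x) -> ple y m).

Definition complete (A : finPoset) : Prop :=
  forall S : {set A}, exists m : A, is_glb S m.

(* [1]^n : functions 'I_n -> bool, ordered componentwise (false < true) *)
Definition cube_le (n : nat) : rel {ffun 'I_n -> bool} :=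
  fun f g => [forall i, f i ==> g i].

Lemma cube_le_refl n : reflexive (@cube_le n).
Proof. by move=> f; apply/forallP=> i; apply/implyP. Qed.

Lemma cube_le_anti n : antisymmetric (@cube_le n).
Proof.
move=> f g /andP[/forallP H1 /forallP H2]; apply/ffunP=> i.
by move: (H1 i) (H2 i); case: (f i); case: (g i).
Qed.

Lemma cube_le_trans n : transitive (@cube_le n).
Proof.
move=> g f h /forallP H1 /forallP H2; apply/forallP=> i.
by move: (H1 i) (H2 i); case: (f i); case: (g i); case: (h i).
Qed.

Definition cube (n : nat) : finPoset :=
  FinPoset (@cube_le_refl n) (@cube_le_anti n) (@cube_le_trans n).

(* Main.v *)
Require Import Defs.
From mathcomp Require Import all_boot.
From Stdlib Require Import ClassicalEpsilon.
Set Implicit Arguments. Unset Strict Implicit. Unset Printing Implicit Defensive.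

Definition glbf (A : finPoset) (H : complete A) (S : {set A}) : A :=
  proj1_sig (constructive_indefinite_description _ (H S)).

Lemma glbfP (A : finPoset) (H : complete A) (S : {set A}) : is_glb S (glbf H S).
Proof. exact: proj2_sig (constructive_indefinite_description _ (H S)). Qed.

Lemma cube_complete n : complete (cube n).
Proof.
move=> S; exists [ffun i => [forall g in S, (g : {ffun 'I_n -> bool}) i]]; split.
- move=> x xS; apply/forallP=> i; rewrite ffunE; apply/implyP=> /forall_inP; exact.
- move=> y Hy; apply/forallP=> i; rewrite ffunE; apply/implyP=> yi.
  apply/forall_inP=> x xS; move: (Hy x xS)=> /forallP /(_ i) /implyP; exact.
Qed.

Definition subPoset (A : finPoset) (f : A -> A) : finPoset.
Proof.
refine (@FinPoset {x : A | f x == x} (fun x y => ple (val x) (val y)) _ _ _).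
- by move=> x; apply: ple_refl.
- by move=> x y H; apply: val_inj; apply: ple_anti.
- by move=> x y z; apply: ple_trans.
Defined.

Lemma split_idem (A : finPoset) (f : A -> A) :
      complete A -> monotone f -> (forall x, f (f x) = f x) ->
      exists B : finPoset, complete B /\
        exists (r : A -> B) (s : B -> A),
          [/\ monotone r, monotone s,
              (forall b, r (s b) = b) & (forall a, s (r a) = f a)].
Proof.
move=> HA Hm Hi.
have fx : forall a, f (f a) == f a by move=> a; apply/eqP.
exists (subPoset f); split.
- move=> S.
  pose m := glbf HA [set val x | x in S].
  have [H1 H2] := glbfP HA [set val x | x in S].
  exists (exist _ (f m) (fx m) : subPoset f); split.
  + move=> x xS; rewrite /ple /=.
    have := Hm _ _ (H1 (val x) (imset_f _ xS)).
    by rewrite (eqP (valP x)).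
  + move=> y Hy; rewrite /ple /=.
    have -> : val y = f (val y) by rewrite (eqP (valP y)).
    apply: Hm; apply: H2 => z /imsetP [x xS ->]; exact: Hy.
- exists (fun a => exist _ (f a) (fx a) : subPoset f), (fun b => val b); split.
  + by move=> x y; apply: Hm.
  + by [].
  + by move=> b; apply: val_inj; rewrite /= (eqP (valP b)).
  + by [].
Qed.

Lemma retract_cube (A : finPoset) : complete A ->
      exists (n : nat) (r : cube n -> A) (s : A -> cube n),
        [/\ monotone r, monotone s & forall a, r (s a) = a].
Proof.
move=> HA.
pose U (g : cube #|A|) : {set A} :=
  [set y | [forall x, (g : {ffun _ -> bool}) (enum_rank x) ==> ple x y]].
exists #|A|, (fun g => glbf HA (U g)),
  (fun a => ([ffun i => ple (enum_val i) a] : cube #|A|)); split.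
- move=> g g' Hg.
  have [_ H2] := glbfP HA (U g').
  have [H1 _] := glbfP HA (U g).
  apply: H2 => x; rewrite inE => /forallP Hx; apply: H1; rewrite inE.
  apply/forallP=> z; apply/implyP=> gz; apply: (implyP (Hx z)).
  exact: (implyP (forallP Hg _)).
- move=> x y Hxy; apply/forallP=> i; rewrite !ffunE; apply/implyP=> H.
  exact: ple_trans H Hxy.
- move=> a; have [H1 H2] := glbfP HA (U [ffun i => ple (enum_val i) a]).
  apply: ple_anti; apply/andP; split.
  + apply: H1; rewrite inE; apply/forallP=> x; rewrite ffunE enum_rankK.
    by apply/implyP.
  + apply: H2 => y; rewrite inE => /forallP /(_ a); rewrite ffunE enum_rankK.
    by rewrite ple_refl.
Qed.

Theorem mainTheorem1 :
  (* the inclusion is well defined: each [1]^n is a finite complete poset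
     (full faithfulness is automatic for an inclusion of full subcategories) *)
  (forall n : nat, complete (cube n)) /\
  (* every idempotent in Poset_{compl,fin} splits in Poset_{compl,fin} *)
  (forall (A : finPoset) (f : A -> A),
      complete A -> monotone f -> (forall x, f (f x) = f x) ->
      exists B : finPoset, complete B /\
        exists (r : A -> B) (s : B -> A),
          [/\ monotone r, monotone s,
              (forall b, r (s b) = b) & (forall a, s (r a) = f a)]) /\
  (* every finite complete poset is a retract in Poset of some [1]^n *)
  (forall A : finPoset, complete A ->
      exists (n : nat) (r : cube n -> A) (s : A -> cube n),
        [/\ monotone r, monotone s & forall a, r (s a) = a]).
Proof.
split; first exact: cube_complete.
split; first exact: split_idem.
exact: retract_cube.
Qed.
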